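(* Let $\mathcal{G}$ be a network of type $\mathcal{C}^1$ with exactly two stubborn agents $s_1,s_2$, neither of which has a self-loop ($w_{s_1s_1}=w_{s_2s_2}=0$), whose opinions evolve by the Friedkin–Johnsen model $\mathbf{x}(k+1)=(I-\beta)W\mathbf{x}(k)+\beta\mathbf{x}(0)$; let $m$ be a global communicator and let $\mathcal{T}_1,\dots,\mathcal{T}_4$ be defined relative to $m$. Suppose $s_1$ has a direct path to $s_2$. Let $(a,b,d)$ be a permissible non-redundant edge modification such that: node $a$ satisfies (i) $a\in\mathcal{T}_3$ and (ii) every simple path from $m$ to $a$ passes through $s_2$; node $d$ violates (i) or (ii) (or both); and $\beta_{s_2}\ge 1/2$. Then the modification increases the influence centrality $c_{s_2}$.
   Context: Let $\mathcal{G}=(\mathcal{V},\mathcal{E})$, $\mathcal{V}=\{1,\dots,n\}$, be a directed graph, where an edge $(i,j)$ means information flows from $i$ to $j$. Its weighted adjacency matrix $W=[w_{ij}]$ is row-stochastic with $w_{ij}>0$ iff $(j,i)\in\mathcal{E}$. In the Friedkin–Johnsen model, $\beta=\mathrm{diag}(\beta_1,\dots,\beta_n)$ with $\beta_i\in[0,1]$, and agent $i$ is stubborn if $\beta_i>0$. Here exactly two agents $s_1,s_2$ are stubborn, with $\beta_{s_1},\beta_{s_2}\in(0,1)$. The influence centrality vector is $\mathbf{c}=P^T\mathbb{1}_n/n$ with $P=(I_n-(I_n-\beta)W)^{-1}\beta$ (and $c_{s_1}+c_{s_2}=1$). ''Increases the influence centrality of $s_2$'' means $c_{s_2}$ is strictly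 larger after the modification. Type $\mathcal{C}^1$: $\mathcal{G}$ is strongly connected and some node $m$ belongs to every cycle of $\mathcal{G}$ other than self-loops; such an $m$ is a global communicator. The stubborn agents are labelled using the level decomposition relative to $m$: the nodes are partitioned into disjoint sets $\mathcal{L}_0^m=\{m\},\mathcal{L}_1^m,\dots,\mathcal{L}_q^m$ such that every node $j\in\mathcal{L}_z^m$ ($z\ge1$) has its in-neighbours (other than itself) only in $\{m\}\cup\mathcal{L}_1^m\cup\dots\cup\mathcal{L}_{z-1}^m$ and at least one in-neighbour in $\mathcal{L}_{z-1}^m$; $s_1\in\mathcal{L}_u^m$, $s_2\in\mathcal{L}_v^m$ with $u\le v$. A direct path from $i$ to $j$ is a path from $i$ to $j$ that does not pass through $m$. The nodes are classified as: $\mathcal{T}_1$: nodes having a direct path from $s_1$ but not from $s_2$; $\mathcal{T}_2$: direct path from $s_2$ but not from $s_1$; $\mathcal{T}_3$: direct paths from both; $\mathcal{T}_4$: from neither. By convention $s_1\in\mathcal{T}_1$, $m\in\mathcal{T}_3$, and when $s_1$ has a direct path to $s_2$, $s_2$ and every node with a direct path from $s_2$ belong to $\mathcal{T}_3$ (so $\mathcal{T}_2=\emptyset$). Edge modification $(a,b,d)$: for distinct nodes $a,b,d$ with $w_{bd}>0$ and some $0<w<w_{bd}$, replace $w_{ba}$ by $w_{ba}+w$ (adding edge $(a,b)$ if absent) and $w_{bd}$ by $w_{bd}-w$, so the row sum of $b$ is unchanged. It is permissible if the modified network is still of type $\mathcal{C}^1$; redundant if it changes the influence centrality of neither stubborn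 agent, non-redundant otherwise. *)

(* Defs.v *)
From HB Require Import structures.
From mathcomp Require Import all_boot all_order all_algebra.
Set Implicit Arguments. Unset Strict Implicit. Unset Printing Implicit Defensive.
Import Order.TTheory GRing.Theory Num.Theory.
Local Open Scope ring_scope.

Section FJ.
Variables (R : realFieldType) (n : nat).
Implicit Types (W : 'M[R]_n) (beta : 'I_n -> R).

Definition row_stochastic W :=
  (forall i j, 0 <= W i j) /\ (forall i, \sum_(j < n) W i j = 1).

(* Edge (i,j) (information flows from i to j) iff w_ji > 0. *)
Definition edge W : rel 'I_n := fun i j => 0 < W j i.

Definition strongly_connected W := forall i j, connect (edge W) i j.

Definition nontrivial_cycle W (c : seq 'I_n) :=
  [/\ cycle (edge W) c, uniq c & (2 <= size c)%N].

Definition global_communicator W m :=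
  forall c, nontrivial_cycle W c -> m \in c.

Definition type_C1 W :=
  strongly_connected W /\ exists m, global_communicator W m.

(* Level decomposition relative to m: lev x = z means x \in L_z^m. *)
Definition level_decomposition W m (lev : 'I_n -> nat) :=
  (forall x, (lev x == 0)%N = (x == m)) /\
  (forall x, x != m ->
     (forall y, y != x -> edge W y x -> (lev y < lev x)%N) /\
     (exists y, [/\ y != x, edge W y x & lev y = (lev x).-1])).

Definition direct_path W m i j :=
  exists p : seq 'I_n,
    [/\ path (edge W) i p, last i p = j & all (fun v => v != m) (i :: p)].

(* Membership in T_3 (direct paths from both s1 and s2), with the
   conventions: s1 \in T_1, m \in T_3, and if s1 has a direct path to s2
   then s2 and every node with a direct path from s2 belong to T_3. *)
Definition in_T3 W m s1 s2 x :=
  x != s1 /\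
  (x = m \/ (direct_path W m s1 x /\ direct_path W m s2 x)
         \/ (direct_path W m s1 s2 /\ (x = s2 \/ direct_path W m s2 x))).

Definition all_simple_paths_through W m s x :=
  forall p : seq 'I_n,
    path (edge W) m p -> last m p = x -> uniq (m :: p) -> s \in m :: p.

Definition diagb beta : 'M[R]_n := \matrix_(i, j) (if i == j then beta i else 0).

Definition FJ_P W beta : 'M[R]_n :=
  invmx (1%:M - (1%:M - diagb beta) *m W) *m diagb beta.

Definition influence_centrality W beta (i : 'I_n) : R :=
  (\sum_(k < n) FJ_P W beta k i) / n%:R.

Definition modify W (a b d : 'I_n) (w : R) : 'M[R]_n :=
  \matrix_(i, j)
    (if i == b then
       (if j == a then W i j + w else if j == d then W i j - w else W i j)
     else W i j).

Definition valid_modification W (a b d : 'I_n) (w : R) :=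
  [/\ uniq [:: a; b; d], 0 < W b d, 0 < w & w < W b d].

Definition permissible W a b d w :=
  valid_modification W a b d w /\ type_C1 (modify W a b d w).

Definition non_redundant W beta s1 s2 a b d w :=
  influence_centrality (modify W a b d w) beta s1 != influence_centrality W beta s1 \/
  influence_centrality (modify W a b d w) beta s2 != influence_centrality W beta s2.

Definition two_stubborn beta s1 s2 :=
  [/\ s1 != s2, 0 < beta s1 < 1, 0 < beta s2 < 1 &
      forall i, i != s1 -> i != s2 -> beta i = 0].

End FJ.

(* Main.v *)
Require Import Defs.
From HB Require Import structures.
From mathcomp Require Import all_boot all_order all_algebra.
From mathcomp Require Import ring lra zify.
Import Order.TTheory GRing.Theory Num.Theory.
Local Open Scope ring_scope.
Set Implicit Arguments. Unset Strict Implicit. Unset Printing Implicit Defensive.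


Lemma argmax_ex (R : realFieldType) n (v : 'I_n -> R) (s0 : 'I_n) :
  exists k, forall j, v j <= v k.
Proof.
case: (@arg_maxP _ R 'I_n s0 xpredT v erefl) => i _ Hi.
by exists i => j; apply: Hi.
Qed.

Lemma row_le (R : realFieldType) n (W : 'M[R]_n) (v : 'I_n -> R) k mu :
  row_stochastic W -> (forall j, v j <= mu) -> \sum_j W k j * v j <= mu.
Proof.
move=> [W0 W1] vmu.
rewrite -[X in _ <= X]mul1r -(W1 k) mulr_suml; apply: ler_sum => j _.
exact: ler_wpM2l.
Qed.

Lemma row_ge (R : realFieldType) n (W : 'M[R]_n) (v : 'I_n -> R) k mu :
  row_stochastic W -> (forall j, mu <= v j) -> mu <= \sum_j W k j * v j.
Proof.
move=> [W0 W1] vmu.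
rewrite -[X in X <= _]mul1r -(W1 k) mulr_suml; apply: ler_sum => j _.
exact: ler_wpM2l.
Qed.

Lemma harm_eq (R : realFieldType) n (W : 'M[R]_n) (v : 'I_n -> R) k y :
  row_stochastic W -> v k = \sum_j W k j * v j -> (forall j, v j <= v k) ->
  0 < W k y -> v y = v k.
Proof.
move=> [W0 W1] hv hmax Wy.
have S : \sum_j W k j * (v k - v j) = 0.
  under eq_bigr do rewrite mulrBr.
  by rewrite sumrB -mulr_suml W1 mul1r -hv subrr.
have : W k y * (v k - v y) = 0.
  apply: (psumr_eq0P (P := xpredT) _ S) => // j _.
  apply: mulr_ge0 => //; rewrite subr_ge0; exact: hmax.
move/eqP; rewrite mulf_eq0 (gt_eqF Wy) /= subr_eq0 => /eqP ->. done.
Qed.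

Lemma ext_max (R : realFieldType) n (W : 'M[R]_n) (sp : pred 'I_n) (v : 'I_n -> R) s0 :
  row_stochastic W -> strongly_connected W -> sp s0 ->
  (forall k, ~~ sp k -> v k = \sum_j W k j * v j) ->
  exists2 s, sp s & forall j, v j <= v s.
Proof.
move=> Ws sc sp0 hv.
have [k0 Hk0] := argmax_ex v s0.
have /connectP [p] := sc s0 k0.
elim/last_ind: p k0 Hk0 => [|p y IH] k Hk /=.
  by move=> _ ek; exists s0 => //; rewrite -ek.
rewrite rcons_path last_rcons => /andP[pp e] ek; subst k.
case: (boolP (sp y)) => [spy|nspy]; first by exists y.
apply: (IH (last s0 p)) => //.
have -> : v (last s0 p) = v y by apply: harm_eq Ws (hv _ nspy) Hk e.
exact: Hk.
Qed.


Lemma lower_bound (R : realFieldType) n (W : 'M[R]_n) (beta v f : 'I_n -> R) s0 :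
  row_stochastic W -> strongly_connected W ->
  (forall k, 0 <= beta k < 1) -> beta s0 != 0 -> (forall k, 0 <= f k) ->
  (forall k, v k = (1 - beta k) * \sum_j W k j * v j + f k) ->
  forall k, 0 <= v k.
Proof.
move=> Ws sc hb b0 hf hv.
have harm : forall k, ~~ ((fun k => (beta k != 0) || (f k != 0)) k) ->
    (fun k => - v k) k = \sum_j W k j * (fun k => - v k) j.
  move=> k /norP [/negPn/eqP bk /negPn/eqP fk].
  rewrite hv bk fk subr0 mul1r addr0 -sumrN; apply: eq_bigr => j _; by rewrite mulrN.
have [s sps Hs] := @ext_max R n W (fun k => (beta k != 0) || (f k != 0)) (fun k => - v k) s0 Ws sc
   (introT orP (or_introl b0)) harm.
have Hs' : forall j, v s <= v j by move=> j; rewrite -lerN2; apply: Hs.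
have key : f s <= beta s * v s.
  have := hv s => E.
  have : (1 - beta s) * v s + f s <= v s.
    rewrite [X in _ <= X]E lerD2r; apply: ler_wpM2l.
      by rewrite subr_ge0; case/andP: (hb s) => _ /ltW.
    exact: row_ge.
  rewrite mulrBl mul1r; set bv := beta s * v s; move=> H; lra.
move=> k; apply: le_trans (Hs' k).
case/orP: sps => [bs|fs].
  have bpos : 0 < beta s by rewrite lt_def bs; case/andP: (hb s).
  by rewrite -(pmulr_rge0 _ bpos); apply: le_trans key.
case: (eqVneq (beta s) 0) => [bs|bs].
  move: key; rewrite bs mul0r => fle; have := hf s => fge.
  have f0 : f s = 0 by lra.
  by move: fs; rewrite f0 eqxx.
have bpos : 0 < beta s by rewrite lt_def bs; case/andP: (hb s).
by rewrite -(pmulr_rge0 _ bpos); apply: le_trans key.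
Qed.


Lemma zero_sol (R : realFieldType) n (W : 'M[R]_n) (beta v : 'I_n -> R) s0 :
  row_stochastic W -> strongly_connected W ->
  (forall k, 0 <= beta k < 1) -> beta s0 != 0 ->
  (forall k, v k = (1 - beta k) * \sum_j W k j * v j) ->
  forall k, v k = 0.
Proof.
move=> Ws sc hb b0 hv k.
have h1 := @lower_bound R n W beta v (fun _ => 0) s0 Ws sc hb b0 (fun _ => lexx 0).
have h2 := @lower_bound R n W beta (fun k => - v k) (fun _ => 0) s0 Ws sc hb b0 (fun _ => lexx 0).
have A := h1 (fun k => etrans (hv k) (esym (addr0 _))) k.
have B : 0 <= - v k.
  apply: h2 => j; rewrite addr0 hv -mulrN -sumrN; congr (_ * _); apply: eq_bigr => i _; by rewrite mulrN.
lra.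
Qed.

Lemma sum_delta (R : realFieldType) n (k : 'I_n) (X : 'I_n -> R) :
  \sum_i (k == i)%:R * X i = X k.
Proof.
rewrite (bigD1 k) //= eqxx mul1r big1 ?addr0 // => i /negbTE.
by rewrite eq_sym => ->; rewrite mul0r.
Qed.

Lemma Mx_entry (R : realFieldType) n (W : 'M[R]_n) (beta : 'I_n -> R) k i :
  (1%:M - (1%:M - diagb beta) *m W) k i = (k == i)%:R - (1 - beta k) * W k i.
Proof.
rewrite !mxE; congr (_ - _).
rewrite (bigD1 k) //= big1 ?addr0.
  by rewrite !mxE eqxx.
move=> l kl; rewrite !mxE eq_sym (negbTE kl) subrr mul0r //.

Qed.

Lemma Mx_mul (R : realFieldType) n (W : 'M[R]_n) (beta : 'I_n -> R) (X : 'I_n -> R) k :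
  \sum_i (1%:M - (1%:M - diagb beta) *m W) k i * X i
   = X k - (1 - beta k) * \sum_i W k i * X i.
Proof.
under eq_bigr do rewrite Mx_entry mulrBl.
rewrite sumrB sum_delta mulr_sumr; congr (_ - _); apply: eq_bigr => i _; by rewrite mulrA.
Qed.

Lemma Mx_unit (R : realFieldType) n (W : 'M[R]_n) (beta : 'I_n -> R) s0 :
  row_stochastic W -> strongly_connected W ->
  (forall k, 0 <= beta k < 1) -> beta s0 != 0 ->
  (1%:M - (1%:M - diagb beta) *m W) \in unitmx.
Proof.
move=> Ws sc hb b0.
rewrite unitmxE unitfE -det_tr; apply/det0P => [[v nz hv]].
move/negP: nz; apply; apply/eqP/rowP => k.
rewrite mxE.
apply: (@zero_sol R n W beta (fun k => v 0 k) s0 Ws sc hb b0) => j.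
move/rowP: hv => /(_ j); rewrite !mxE.
under eq_bigr do rewrite mxE mulrC.
rewrite Mx_mul => /eqP; rewrite subr_eq0 => /eqP ->; apply: congr1.
by apply: eq_bigr => i _; rewrite mulrC.
Qed.

Lemma FJ_col (R : realFieldType) n (W : 'M[R]_n) (beta : 'I_n -> R) s0 j k :
  row_stochastic W -> strongly_connected W ->
  (forall k, 0 <= beta k < 1) -> beta s0 != 0 ->
  FJ_P W beta k j = (1 - beta k) * \sum_i W k i * FJ_P W beta i j
                    + (if k == j then beta k else 0).
Proof.
move=> Ws sc hb b0.
have U := Mx_unit Ws sc hb b0.
have E : (1%:M - (1%:M - diagb beta) *m W) *m FJ_P W beta = diagb beta.
  by rewrite /FJ_P mulKVmx.
move/matrixP: E => /(_ k j); rewrite [LHS]mxE Mx_mul [RHS]mxE => <-.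
by rewrite [RHS]addrC subrK.
Qed.


Lemma lev_path (R : realFieldType) n (W : 'M[R]_n) m lev :
  level_decomposition W m lev -> forall i p, path (edge W) i p ->
  all (fun v => v != m) (i :: p) ->
  (lev i <= lev (last i p))%N /\ (i != last i p -> (lev i < lev (last i p))%N).
Proof.
move=> [L0 L1] i p; elim: p i => [|y p IH] i /=.
  by move=> _ _; split => //; rewrite eqxx.
move=> /andP[e pp] /and3P[im ym ap].
have [] := IH y pp; first by rewrite /= ym.
case: (eqVneq y i) => [-> | yi] H1 H2; first by split => // /H2.
have lt : (lev i < lev y)%N by apply: (proj1 (L1 y ym)) => //; rewrite eq_sym.
split; first by apply: leq_trans H1; apply: ltnW.
by move=> _; apply: leq_trans H1.
Qed.

Definition Cnode (R : realFieldType) n (W : 'M[R]_n) m s2 k :=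
  forall p, path (edge W) m p -> last m p = k -> s2 \in m :: p.

Lemma simple_C (R : realFieldType) n (W : 'M[R]_n) m s2 k :
  all_simple_paths_through W m s2 k -> Cnode W m s2 k.
Proof.
move=> H p pp.
case: (shortenP pp) => p' pp' up' sub lp.
have := H p' pp' lp up'.
rewrite !inE => /orP[->//|/sub ->]; by rewrite orbT.
Qed.

Lemma C_pred (R : realFieldType) n (W : 'M[R]_n) m s2 k y :
  Cnode W m s2 k -> k != s2 -> edge W y k -> Cnode W m s2 y.
Proof.
move=> Ck ks2 e p pp lp.
have := Ck (rcons p k).
rewrite rcons_path pp lp e last_rcons -rcons_cons mem_rcons inE => /(_ isT erefl).
by rewrite eq_sym (negbTE ks2).
Qed.

Lemma C_m (R : realFieldType) n (W : 'M[R]_n) m s2 :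
  s2 != m -> ~ Cnode W m s2 m.
Proof.
by move=> sm C; have := C [::] isT erefl; rewrite inE (negbTE sm).
Qed.

Lemma C_lev (R : realFieldType) n (W : 'M[R]_n) m s2 lev :
  level_decomposition W m lev -> s2 != m ->
  forall k, Cnode W m s2 k -> k != s2 -> (lev s2 < lev k)%N.
Proof.
move=> [L0 L1] sm.
suff : forall N k, (lev k <= N)%N -> Cnode W m s2 k -> k != s2 -> (lev s2 < lev k)%N.
  by move=> H k; apply: H (leqnn _).
elim=> [|N IH] k hk Ck ks.
  have km : k != m by apply/eqP => km; subst k; exact: (C_m sm Ck).
  have : (lev k == 0)%N by rewrite -leqn0.
  by rewrite L0 (negbTE km).
have km : k != m by apply/eqP => km; subst k; exact: (C_m sm Ck).
have lk : (lev k != 0)%N by rewrite L0.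
have [_ [y [yk e ly]]] := L1 k km.
have Cy := C_pred Ck ks e.
case: (eqVneq y s2) => [ys|ys].
  by rewrite -ys ly; lia.
have := IH y _ Cy ys; rewrite ly; lia.
Qed.


Lemma C_val (R : realFieldType) n (W : 'M[R]_n) m s1 s2 lev (x : 'I_n -> R) :
  row_stochastic W -> level_decomposition W m lev -> s2 != m -> ~ Cnode W m s2 s1 ->
  (forall k, k != s1 -> k != s2 -> x k = \sum_j W k j * x j) ->
  forall k, Cnode W m s2 k -> x k = x s2.
Proof.
move=> [W0 W1] [L0 L1] sm ns1 hx.
suff : forall N k, (lev k <= N)%N -> Cnode W m s2 k -> x k = x s2.
  by move=> H k; apply: H (leqnn _).
elim=> [|N IH] k hk Ck; case: (eqVneq k s2) => [->//|ks].
  have km : k != m by apply/eqP => km; subst k; exact: (C_m sm Ck).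
  have : (lev k == 0)%N by rewrite -leqn0.
  by rewrite L0 (negbTE km).
have km : k != m by apply/eqP => km; subst k; exact: (C_m sm Ck).
have ks1 : k != s1 by apply/eqP => ks1; subst k.
have [Llt [y [yk e ly]]] := L1 k km.
have eqj : forall j, W k j * x j = W k j * (if j == k then x k else x s2).
  move=> j; case: (eqVneq j k) => [->|jk] //.
  have := W0 k j; rewrite le_eqVlt => /orP[/eqP <-|pos]; first by rewrite !mul0r.
  congr (_ * _); apply: IH.
    by have := Llt j jk pos; lia.
  exact: C_pred Ck ks pos.
have E := hx k ks1 ks.
rewrite (eq_bigr _ (fun j _ => eqj j)) in E.
rewrite (bigD1 k) //= eqxx in E.
rewrite (eq_bigr (fun j => W k j * x s2)) in E; last by move=> j /negbTE ->.
rewrite -mulr_suml in E.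
have S1 := W1 k; rewrite (bigD1 k) //= in S1.
set S := \sum_(j < n | j != k) W k j in E S1.
have Spos : 0 < S.
  rewrite /S (bigD1 y) //=; apply: ltr_wpDr; first by apply: sumr_ge0.
  exact: e.
set a := W k k in E S1.
set xk := x k in E *. set s := x s2 in E *.
have ha : a = 1 - S by lra.
rewrite ha in E.
have : S * (xk - s) = xk - ((1 - S) * xk + S * s) by ring.
rewrite -E subrr => /eqP; rewrite mulf_eq0 (gt_eqF Spos) /= subr_eq0 => /eqP //.
Qed.


Lemma modify_entry (R : realFieldType) n (W : 'M[R]_n) a b d w i j :
  a != d ->
  modify W a b d w i j = W i j + (if i == b then w * ((j == a)%:R - (j == d)%:R) else 0).
Proof.
move=> ad; rewrite mxE; case: (i == b); last by rewrite addr0.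
case: (eqVneq j a) => [->|ja]; first by rewrite ?eqxx (negbTE ad) subr0 mulr1.
case: (eqVneq j d) => [->|jd]; first by rewrite ?eqxx sub0r mulrN1.
by rewrite subrr mulr0 addr0.
Qed.

Lemma modify_sum (R : realFieldType) n (W : 'M[R]_n) a b d w i (v : 'I_n -> R) :
  a != d ->
  \sum_j modify W a b d w i j * v j =
  \sum_j W i j * v j + (if i == b then w * (v a - v d) else 0).
Proof.
move=> ad.
under eq_bigr do rewrite modify_entry // mulrDl.
rewrite big_split /=; congr (_ + _).
case: (i == b); last by rewrite big1 // => j _; rewrite mul0r.
under eq_bigr do rewrite -mulrA mulrBl.
rewrite -mulr_sumr sumrB.
under eq_bigr do rewrite eq_sym.
rewrite sum_delta.
under eq_bigr do rewrite eq_sym.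
by rewrite sum_delta.
Qed.

Lemma modify_stoch (R : realFieldType) n (W : 'M[R]_n) a b d w :
  row_stochastic W -> valid_modification W a b d w ->
  row_stochastic (modify W a b d w).
Proof.
move=> [W0 W1] [u bd w0 wbd].
have ad : a != d by move: u; rewrite /= !inE negb_or => /andP[/andP[_ ->]].
split.
  move=> i j; rewrite mxE; case: eqP => [ib|_]; last exact: W0.
  case: eqP => _; first by apply: addr_ge0 => //; apply: ltW.
  case: eqP => [jd|_]; last exact: W0.
  by rewrite subr_ge0 ib jd; apply: ltW.
move=> i; have := modify_sum W b w i (fun _ => 1) ad.
under eq_bigr do rewrite mulr1.
move=> ->; under eq_bigr do rewrite mulr1.
by rewrite W1 subrr mulr0; case: (i == b); rewrite addr0.
Qed.

Lemma cent_diff (R : realFieldType) n (W W' : 'M[R]_n) beta j :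
  influence_centrality W' beta j - influence_centrality W beta j =
  (\sum_k (FJ_P W' beta k j - FJ_P W beta k j)) / n%:R.
Proof. by rewrite /influence_centrality -mulrBl sumrB. Qed.

Lemma delta_eq (R : realFieldType) n (W : 'M[R]_n) (beta : 'I_n -> R) a b d w s0 j :
  row_stochastic W -> strongly_connected W ->
  strongly_connected (modify W a b d w) -> valid_modification W a b d w ->
  (forall k, 0 <= beta k < 1) -> beta s0 != 0 ->
  forall k,
  (fun k => FJ_P (modify W a b d w) beta k j - FJ_P W beta k j) k =
  (1 - beta k) * \sum_i modify W a b d w k i *
     (fun k => FJ_P (modify W a b d w) beta k j - FJ_P W beta k j) i
  + (1 - beta k) * (if k == b then w * (FJ_P W beta a j - FJ_P W beta d j) else 0).
Proof.
move=> Ws sc sc' val hb b0 k /=.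
have ad : a != d by case: val => u _ _ _; move: u; rewrite /= !inE negb_or => /andP[/andP[_ ->]].
have Ws' := modify_stoch Ws val.
rewrite (FJ_col j k Ws' sc' hb b0) (FJ_col j k Ws sc hb b0).
have := modify_sum W b w k (fun i => FJ_P W beta i j) ad => /= E.
under [X in _ = _ * X + _]eq_bigr do rewrite mulrBr.
rewrite sumrB E.
set A := \sum_i _ * FJ_P (modify W a b d w) beta i j.
set B := \sum_i W k i * FJ_P W beta i j.
set C := if k == b then _ else _.
set D := if k == j then _ else _.
ring.
Qed.

Unset Implicit Arguments.


Theorem corollary1 (R : realFieldType) (n : nat) (W : 'M[R]_n)
    (beta : 'I_n -> R) (s1 s2 m a b d : 'I_n) (w : R) :
  row_stochastic W ->
  type_C1 W ->
  two_stubborn beta s1 s2 ->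
  W s1 s1 = 0 -> W s2 s2 = 0 ->
  global_communicator W m ->
  (exists lev, level_decomposition W m lev /\ (lev s1 <= lev s2)%N) ->
  direct_path W m s1 s2 ->
  permissible W a b d w ->
  non_redundant W beta s1 s2 a b d w ->
  in_T3 W m s1 s2 a -> all_simple_paths_through W m s2 a ->
  ~ (in_T3 W m s1 s2 d /\ all_simple_paths_through W m s2 d) ->
  1 / 2 <= beta s2 ->
  influence_centrality W beta s2 < influence_centrality (modify W a b d w) beta s2.
Proof.
move=> Ws [sc _] [s12 b1 b2 bz] _ _ _ [lev [LD _]] dps [val [sc' _]] nonred [as1 _] spa _ _.
have hb : forall k, 0 <= beta k < 1.
  move=> k; case: (eqVneq k s1) => [->|k1]; first by case/andP: b1 => /ltW -> ->.
  case: (eqVneq k s2) => [->|k2]; first by case/andP: b2 => /ltW -> ->.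
  by rewrite bz // lexx ltr01.
have b0 : beta s2 != 0 by case/andP: b2 => /gt_eqF ->.
have [sm s1m] : s2 != m /\ s1 != m.
  case: dps => p [_ lp /allP al]; split; last by apply: al; rewrite inE eqxx.
  by apply: al; rewrite -lp mem_last.
have ad : a != d by case: val => u _ _ _; move: u; rewrite /= !inE negb_or => /andP[/andP[_ ->]].
have Ws' := modify_stoch Ws val.
set W' := modify W a b d w.
set x := fun k => FJ_P W beta k s2.
have hx : forall k, x k = (1 - beta k) * \sum_i W k i * x i + (if k == s2 then beta k else 0).
  by move=> k; apply: FJ_col Ws sc hb b0.
have xge : forall k, 0 <= x k.
  apply: (@lower_bound R n W beta x (fun k => if k == s2 then beta k else 0) s2 Ws sc hb b0) => //.
  by move=> k; case: ifP => // _; case/andP: (hb k).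
have harm : forall k, beta k = 0 -> x k = \sum_i W k i * x i.
  by move=> k bk; rewrite hx bk subr0 mul1r; case: ifP => _; rewrite addr0.
have xmax : forall k, x k <= x s2.
  have [s sps Hs] := @ext_max R n W (fun k => beta k != 0) x s2 Ws sc b0
     (fun k nk => harm k (eqP (negPn nk))).
  case: (eqVneq s s2) => [<-//|ss2].
  case: (eqVneq s s1) => [ss1|ss1]; last by move: sps; rewrite bz ?eqxx.
  subst s.
  have : x s1 <= (1 - beta s1) * x s1.
    rewrite {1}hx (negbTE s12) addr0; apply: ler_wpM2l.
      by rewrite subr_ge0; case/andP: (hb s1) => _ /ltW.
    exact: row_le.
  move=> H k; have b1p : 0 < beta s1 by case/andP: b1.
  have : x s1 <= 0 by nra.
  move=> H2; apply: le_trans (Hs k) _; apply: le_trans H2 _; exact: xge.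
have Ca := simple_C spa.
have nCs1 : ~ Cnode W m s2 s1.
  move=> Cs1; have := C_lev LD sm Cs1 s12.
  case: dps => p [pp lp al].
  have [_ H] := lev_path LD pp al; rewrite lp in H.
  by have := H s12; lia.
have xa : x a = x s2.
  apply: (C_val Ws LD sm nCs1) => // k k1 k2; apply: harm; exact: bz.
have dx := delta_eq s2 Ws sc sc' val hb b0.
have [xad|xad] := leP (x a) (x d).
- exfalso.
  have xeq : x a = x d by apply: le_anti; rewrite xad xa xmax.
  have dz : forall k, FJ_P W' beta k s2 - FJ_P W beta k s2 = 0.
    apply: (@zero_sol R n W' beta _ s2 Ws' sc' hb b0) => k.
    have xeq' : FJ_P W beta a s2 = FJ_P W beta d s2 := xeq.
    rewrite [LHS]dx xeq' subrr mulr0; case: ifP => _; rewrite mulr0 addr0 //.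
  set y := fun k => FJ_P W beta k s1.
  have hy : forall k, y k = (1 - beta k) * \sum_i W k i * y i + (if k == s1 then beta k else 0).
    by move=> k; apply: FJ_col Ws sc hb b0.
  have z0 : forall k, x k + y k - 1 = 0.
    apply: (@zero_sol R n W beta _ s2 Ws sc hb b0) => k.
    have -> : \sum_j W k j * (x j + y j - 1) =
              \sum_j W k j * x j + \sum_j W k j * y j - 1.
      under eq_bigr do rewrite mulrBr mulr1 mulrDr.
      by rewrite sumrB big_split /= (proj2 Ws).
    rewrite {1}hx {1}hy.
    have E : (if k == s2 then beta k else 0) + (if k == s1 then beta k else 0) = beta k.
      case: (eqVneq k s2) => [->|k2]; first by rewrite eq_sym (negbTE s12) addr0.
      case: (eqVneq k s1) => [->|k1]; first by rewrite add0r.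
      by rewrite bz // addr0.
    move: E.
    set X := \sum_i W k i * x i; set Y := \sum_i W k i * y i.
    set e2 := if k == s2 then _ else _; set e1 := if k == s1 then _ else _.
    set X' := \sum_j W k j * x j; set Y' := \sum_j W k j * y j.
    move=> E; have -> : e1 = beta k - e2 by rewrite -E; ring.
    rewrite /X' /Y' -/X -/Y. ring.
  have xeq' : FJ_P W beta a s2 = FJ_P W beta d s2 := xeq.
  have yeq : FJ_P W beta a s1 = FJ_P W beta d s1.
    have := z0 a; have := z0 d; rewrite /y -/x /=; lra.
  have dz1 : forall k, FJ_P W' beta k s1 - FJ_P W beta k s1 = 0.
    apply: (@zero_sol R n W' beta _ s2 Ws' sc' hb b0) => k.
    rewrite [LHS](delta_eq s1 Ws sc sc' val hb b0) yeq subrr mulr0.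
    by case: ifP; rewrite mulr0 addr0.
  case: nonred => /eqP H; apply: H; apply/eqP; rewrite -subr_eq0 cent_diff; apply/eqP.
    by rewrite big1 ?mul0r.
  by rewrite big1 ?mul0r.
have npos : (0 < n)%N by apply: leq_ltn_trans (ltn_ord s1).
set f := fun k => (1 - beta k) * (if k == b then w * (FJ_P W beta a s2 - FJ_P W beta d s2) else 0).
have w0 : 0 < w by case: val.
have bb : 0 < 1 - beta b by rewrite subr_gt0; case/andP: (hb b).
have fge : forall k, 0 <= f k.
  move=> k; rewrite /f; apply: mulr_ge0; first by rewrite subr_ge0; case/andP: (hb k) => _ /ltW.
  case: ifP => // _; apply: mulr_ge0; first exact: ltW.
  by rewrite subr_ge0; apply: ltW.
have dge := @lower_bound R n W' beta _ f s2 Ws' sc' hb b0 fge dx.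
have dbpos : 0 < FJ_P W' beta b s2 - FJ_P W beta b s2.
  rewrite (dx b); apply: ltr_wpDl.
    apply: mulr_ge0; first by rewrite subr_ge0; case/andP: (hb b) => _ /ltW.
    apply: sumr_ge0 => i _; apply: mulr_ge0; first by case: Ws' => W0 _; apply: W0.
    exact: dge.
  rewrite eqxx; apply: mulr_gt0 => //; apply: mulr_gt0 => //.
  by rewrite subr_gt0.
rewrite -subr_gt0 cent_diff; apply: divr_gt0; last by rewrite ltr0n.
rewrite (bigD1 b) //=; apply: ltr_wpDr => //.
by apply: sumr_ge0 => i _; apply: dge.
Qed.
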